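(* The function $\psi:\mathcal{P}_M\times\Theta^M\to[0,\infty]$ defined by $$\psi(\boldsymbol{w},\boldsymbol{\theta}) := \inf_{\boldsymbol{\lambda}\in\mathrm{Alt}(\boldsymbol{\theta})}\ \sum_{m=1}^M w_m\, D^{(m)}_{\mathrm{KL}}(\boldsymbol{\theta}_m,\boldsymbol{\lambda}_m)$$ is continuous on $\mathcal{P}_M\times\Theta^M$.
   Context: $M$ arms, $K$ clusters with $1<K<M$, $\Theta\subset\mathbb{R}^d$ compact. For each arm $m$, a parametric family $\{P_m(\cdot\mid\boldsymbol{\rho}):\boldsymbol{\rho}\in\Theta\}$ with $D^{(m)}_{\mathrm{KL}}(\boldsymbol{\rho}_1,\boldsymbol{\rho}_2)=\mathbb{E}_{X\sim P_m(\cdot\mid\boldsymbol{\rho}_1)}\big[\log\frac{P_m(X\mid\boldsymbol{\rho}_1)}{P_m(X\mid\boldsymbol{\rho}_2)}\big]$, assumed finite and uniformly continuous in $(\boldsymbol{\rho}_1,\boldsymbol{\rho}_2)\in\Theta\times\Theta$ for each $m$. $\mathcal{P}_M=\{\boldsymbol{w}\in\mathbb{R}_+^M:\sum_m w_m=1\}$. For $\boldsymbol{\theta}\in\Theta^M$, $\mathcal{C}(\boldsymbol{\theta})\in[K]^M$ is the cluster index vector obtained by single-linkage clustering of the points $\boldsymbol{\theta}_1,\dots,\boldsymbol{\theta}_M$ (start from singletons, repeatedly merge the two clusters at smallest minimum pairwise Euclidean distance, ties broken by a fixed rule, until $K$ clusters remain). $\boldsymbol{c}\sim\boldsymbol{c}'$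 iff $\boldsymbol{c}=\sigma(\boldsymbol{c}')$ for a permutation $\sigma$ of $[K]$. $\mathrm{Alt}(\boldsymbol{\theta})=\{\boldsymbol{\lambda}\in\Theta^M:\mathcal{C}(\boldsymbol{\lambda})\nsim\mathcal{C}(\boldsymbol{\theta})\}$. *)

(* Defs.v *)
From HB Require Import structures.
From mathcomp Require Import all_boot all_order all_algebra all_fingroup.
From mathcomp Require Import all_classical all_reals all_analysis.
Set Implicit Arguments. Unset Strict Implicit. Unset Printing Implicit Defensive.
Import Order.TTheory GRing.Theory Num.Theory.
Import numFieldNormedType.Exports.
Local Open Scope classical_set_scope.
Local Open Scope ring_scope.

Section Defs.
Variable R : realType.

Definition eucl_dist (d : nat) (x y : 'rV[R]_d) : R :=
  Num.sqrt (\sum_(i < d) (x ord0 i - y ord0 i) ^+ 2).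

Definition simplex (M : nat) : set 'rV[R]_M :=
  [set w | (forall m, 0 <= w ord0 m) /\ \sum_(m < M) w ord0 m = 1].

(** A current clustering is encoded by lab : 'I_M -> 'I_M mapping each
    point to the smallest index of its cluster (its "root").          *)

Definition sl_cand (M d : nat) (theta : 'M[R]_(M, d)) (lab : 'I_M -> 'I_M)
    (p : 'I_M * 'I_M) : bool :=
  [&& lab p.1 == p.1, lab p.2 == p.2, (p.1 < p.2)%N &
   [exists i, exists j,
     [&& lab i == p.1, lab j == p.2 &
      [forall i', forall j', (lab i' != lab j') ==>
         (eucl_dist (row i theta) (row j theta) <= eucl_dist (row i' theta) (row j' theta))]]]].

(* One merge step.  Ties are broken by the fixed rule "lexicographically
   first pair (r, s) of cluster roots" ([pick] returns the first element
   in the (lexicographic) enumeration of 'I_M * 'I_M). *)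
Definition sl_step (M d : nat) (theta : 'M[R]_(M, d)) (lab : 'I_M -> 'I_M)
    : 'I_M -> 'I_M :=
  match [pick p | sl_cand theta lab p] with
  | Some p => fun i => if lab i == p.2 then p.1 else lab i
  | None => lab
  end.

Definition sl_labels (M d K : nat) (theta : 'M[R]_(M, d)) : 'I_M -> 'I_M :=
  iter (M - K) (sl_step theta) id.

(* Cluster index vector C(theta) in [K]^M (labels 0..K-1; clusters are
   numbered by increasing smallest element). *)
Definition cluster_index (M d K : nat) (theta : 'M[R]_(M, d)) (m : 'I_M) : nat :=
  let lab := sl_labels K theta in
  #|[set r : 'I_M | (lab r == r) && (r < lab m)%N]|.

Definition clust_equiv (M K : nat) (c c' : 'I_M -> nat) : Prop :=
  exists sigma : {perm 'I_K},
    forall m, exists hm : (c' m < K)%N, c m = val (sigma (Ordinal hm)).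

Definition paramsM (M d : nat) (Theta : set 'rV[R]_d) : set 'M[R]_(M, d) :=
  [set theta | forall m, Theta (row m theta)].

Definition Alt (M d K : nat) (Theta : set 'rV[R]_d) (theta : 'M[R]_(M, d))
    : set 'M[R]_(M, d) :=
  [set lam | paramsM Theta lam /\
             ~ clust_equiv K (cluster_index K lam) (cluster_index K theta)].

Definition kl_integrand (a b : R) : \bar R :=
  if a == 0 then 0%E else if b == 0 then +oo%E else (a * ln (a / b))%:E.

Definition KL (dT : measure_display) (T : measurableType dT)
    (mu : {measure set T -> \bar R}) (f g : T -> R) : \bar R :=
  (\int[mu]_x kl_integrand (f x) (g x))%E.

Definition psi (dT : measure_display) (T : measurableType dT) (M d K : nat)
    (Theta : set 'rV[R]_d) (mu : 'I_M -> {measure set T -> \bar R})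
    (p : 'I_M -> 'rV[R]_d -> T -> R) (w : 'rV[R]_M) (theta : 'M[R]_(M, d))
    : \bar R :=
  ereal_inf [set (\sum_(m < M) (w ord0 m)%:E *
                    KL (mu m) (p m (row m theta)) (p m (row m lam)))%E
            | lam in Alt K Theta theta].

End Defs.
Arguments simplex {R} M.
Arguments paramsM {R} M {d} Theta.

(* Main.v *)
Require Import Defs.
From HB Require Import structures.
From mathcomp Require Import all_boot all_order all_algebra all_fingroup.
From mathcomp Require Import all_classical all_reals all_analysis.
From mathcomp Require Import measurable_realfun.
From mathcomp Require Import zify lra ring.
Import Order.TTheory GRing.Theory Num.Theory.
Import numFieldNormedType.Exports.
Local Open Scope classical_set_scope.
Local Open Scope ring_scope.
Set Implicit Arguments. Unset Strict Implicit.

Lemma kl_ge (R : realType) (a b : R) : 0 <= a -> 0 <= b ->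
  ((a - b)%:E <= kl_integrand a b)%E.
Proof.
move=> a0 b0; rewrite /kl_integrand.
have [->|an0] := eqVneq a 0; first by rewrite lee_fin sub0r oppr_le0.
have [->|bn0] := eqVneq b 0; first exact: leey.
rewrite lee_fin.
have ap : 0 < a by rewrite lt0r an0.
have bp : 0 < b by rewrite lt0r bn0.
have : ln (1 + (b / a - 1)) <= b / a - 1.
  by apply: le_ln1Dx; rewrite ltrBrDl subrr divr_gt0.
rewrite addrC subrK => H.
have -> : a / b = (b / a)^-1 by rewrite invf_div.
rewrite lnV; last by rewrite posrE divr_gt0.
have : a * (- ln (b / a)) >= a * (1 - b / a).
  by rewrite ler_pM2l // lerNr opprB.
by rewrite mulrBr mulr1 mulrCA divff ?mulr1 // gt_eqF.
Qed.

Lemma kl_diag (R : realType) (a : R) : kl_integrand a a = 0%E.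
Proof.
rewrite /kl_integrand; case: eqP => // /eqP an0.
by rewrite divff // ln1 mulr0.
Qed.

Lemma kl_meas (R : realType) dT (T : measurableType dT) (f g : T -> R) :
  measurable_fun setT f -> measurable_fun setT g ->
  (forall x, 0 <= f x) -> (forall x, 0 <= g x) ->
  measurable_fun (setT : set T) ((fun x => kl_integrand (f x) (g x)) : T -> \bar R).
Proof.
move=> mf mg f0 g0.
have -> : (fun x => kl_integrand (f x) (g x)) =
  (fun x => if f x == 0 then 0%E else if g x == 0 then +oo%E
            else (f x * (ln (f x) - ln (g x)))%:E).
  apply/funext => x; rewrite /kl_integrand.
  case: eqVneq => // fn0; case: eqVneq => // gn0.
  have fp : 0 < f x by rewrite lt0r fn0 f0.
  have gp : 0 < g x by rewrite lt0r gn0 g0.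
  rewrite lnM ?posrE ?invr_gt0 // lnV ?posrE //.
apply: measurable_fun_ifT.
- by apply: measurable_fun_eqr => //; exact: measurable_cst.
- exact: measurable_cst.
apply: measurable_fun_ifT.
- by apply: measurable_fun_eqr => //; exact: measurable_cst.
- exact: measurable_cst.
apply/measurable_EFinP; apply: measurable_funM => //.
apply: measurable_funB.
- exact: measurableT_comp (@measurable_ln R) mf.
- exact: measurableT_comp (@measurable_ln R) mg.
Qed.

Lemma KL_ge0 (R : realType) dT (T : measurableType dT)
  (mu : {measure set T -> \bar R}) (f g : T -> R) :
  measurable_fun setT f -> measurable_fun setT g ->
  (forall x, 0 <= f x) -> (forall x, 0 <= g x) ->
  (\int[mu]_x (f x)%:E = 1)%E -> (\int[mu]_x (g x)%:E = 1)%E ->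
  KL mu f g \is a fin_num -> (0 <= KL mu f g)%E.
Proof.
move=> mf mg f0 g0 If Ig fin.
set h := (fun x => kl_integrand (f x) (g x)) : T -> \bar R.
have mh : measurable_fun setT h by exact: (kl_meas mf mg f0 g0).
have key x : (h^\- x + (f x)%:E <= h^\+ x + (g x)%:E)%E.
  have := kl_ge (f0 x) (g0 x); rewrite -/(h x) funeposE funenegE.
  case: (h x) => [r||] //=.
  - rewrite lee_fin => H.
    have [r0|r0] := leP 0 r.
    + rewrite (max_idPl (_ : (0 <= r%:E)%E)) ?lee_fin //.
      rewrite (max_idPr (_ : ((- r)%:E <= 0)%E)) ?lee_fin ?oppr_le0 //.
      by rewrite add0r -lerBlDr.
    + have r0' : (r%:E <= 0)%E by rewrite lee_fin ltW.
      have r0'' : (0 <= (- r)%:E)%E by rewrite lee_fin oppr_ge0 ltW.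
      rewrite (max_idPr r0') (max_idPl r0'') -!EFinD lee_fin.
      by rewrite add0r addrC lerBlDr addrC -lerBlDr.
  - by rewrite addye ?leey.
have mhp : measurable_fun setT (h^\+)%E by exact: measurable_funepos.
have mhn : measurable_fun setT (h^\-)%E by exact: measurable_funeneg.
have mfE : measurable_fun setT (EFin \o f) by exact/measurable_EFinP.
have mgE : measurable_fun setT (EFin \o g) by exact/measurable_EFinP.
have le1 : (\int[mu]_x (h^\- x + (f x)%:E) <= \int[mu]_x (h^\+ x + (g x)%:E))%E.
  apply: ge0_le_integral.
  - exact: measurableT.
  - by move=> x _; rewrite adde_ge0 ?funeneg_ge0 ?lee_fin.
  - exact: emeasurable_funD.
  - exact: emeasurable_funD.
  - by move=> x _; exact: key.
rewrite ge0_integralD // in le1; last by move=> x _; rewrite lee_fin.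
rewrite ge0_integralD // in le1; last by move=> x _; rewrite lee_fin.
rewrite If Ig leeD2rE // in le1.
move: fin; rewrite /KL -/h integralE => fin.
have [finn|] := boolP (\int[mu]_x h^\- x \is a fin_num)%E.
  by rewrite sube_ge0 ?finn.
rewrite ge0_fin_numE ?integral_ge0 // -leNgt leye_eq => /eqP hn.
move: le1 fin; rewrite hn leye_eq => /eqP -> //.
Qed.

Definition roots (M : nat) (lab : 'I_M -> 'I_M) : {set 'I_M} := [set r : 'I_M | lab r == r]%SET.
Definition idem (M : nat) (lab : 'I_M -> 'I_M) := forall i, lab (lab i) = lab i.

Lemma eucl_distC (R : realType) (d : nat) (x y : 'rV[R]_d) : eucl_dist x y = eucl_dist y x.
Proof.
rewrite /eucl_dist; congr Num.sqrt; apply: eq_bigr => i _.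
by rewrite -sqrrN opprB.
Qed.

Lemma cand_exists (R : realType) (M d : nat) (theta : 'M[R]_(M, d)) lab : idem lab -> (1 < #|roots lab|)%N ->
  exists p, sl_cand theta lab p.
Proof.
move=> il c2.
have [r [s [Hr Hs rs]]] := card_gt1P c2.
rewrite !inE in Hr Hs.
pose P := [pred q : 'I_M * 'I_M | lab q.1 != lab q.2].
have P0 : P (r, s) by rewrite /P /= (eqP Hr) (eqP Hs).
pose F := fun q : 'I_M * 'I_M => eucl_dist (row q.1 theta) (row q.2 theta).
case: (arg_minP F P0) => [[i j]] /= Pij Fmin.
have key : forall i' j', (lab i' != lab j') ==> (F (i, j) <= F (i', j')).
  by move=> i' j'; apply/implyP => H; exact: (Fmin (i', j')).
have [lt|] := ltnP (lab i) (lab j).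
  exists (lab i, lab j); rewrite /sl_cand /= !il !eqxx lt /=.
  by apply/fintype.existsP; exists i; apply/fintype.existsP; exists j; rewrite !eqxx /=; apply/fintype.forallP => i'; apply/fintype.forallP => j'; exact: key.
rewrite leq_eqVlt => /orP [/eqP/val_inj E|lt]; first by rewrite /P /= E eqxx in Pij.
exists (lab j, lab i); rewrite /sl_cand /= !il !eqxx lt /=.
apply/fintype.existsP; exists j; apply/fintype.existsP; exists i; rewrite !eqxx /=.
apply/fintype.forallP => i'; apply/fintype.forallP => j'; rewrite /F eucl_distC; exact: key.
Qed.

Lemma step_props (R : realType) (M d : nat) (theta : 'M[R]_(M, d)) lab : idem lab -> (1 < #|roots lab|)%N ->
  idem (sl_step theta lab) /\ #|roots (sl_step theta lab)| = #|roots lab|.-1.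
Proof.
move=> il c2; rewrite /sl_step; case: pickP => [[r s] /= Hc | none]; last first.
  by have [p Hp] := cand_exists theta il c2; move: (none p); rewrite Hp.
move: Hc; rewrite /sl_cand /= => /and4P [/eqP lr /eqP ls rs _].
have rns : (r == s) = false by apply/negbTE; rewrite neq_ltn rs.
split.
  move=> i; case: (eqVneq (lab i) s) => [E|E].
    by rewrite lr rns.
  by rewrite il (negbTE E).
have -> : roots (fun i => if lab i == s then r else lab i) = roots lab :\ s.
  apply/setP => j; rewrite !inE.
  case: (eqVneq (lab j) s) => [E|E].
    case: (eqVneq j s) => [->|js]; first by rewrite rns.
    rewrite /= E [s == j]eq_sym (negbTE js); apply/negbTE/eqP => rj; move: E; rewrite -rj lr => /eqP.
    by rewrite rns.
  case: (eqVneq j s) => [js|js] //=.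
  by move: E; rewrite js ls eqxx.
have := cardsD1 s (roots lab); rewrite inE ls eqxx /= => ->.
by rewrite add1n.
Qed.

Lemma iter_props (R : realType) (M d : nat) (theta : 'M[R]_(M, d)) (K : nat) : (1 < K)%N -> (K <= M)%N -> forall k, (k <= M - K)%N ->
  idem (iter k (sl_step theta) id) /\ #|roots (iter k (sl_step theta) id)| = (M - k)%N.
Proof.
move=> K1 KM; elim=> [_|k IH] /=.
  split => //; rewrite /roots.
  have -> : [set r : 'I_M | id r == r]%SET = [set: 'I_M]%SET by apply/setP => r; rewrite !inE eqxx.
  by rewrite cardsT card_ord subn0.
move=> kK; have [il cr] := IH (ltnW kK).
have c2 : (1 < #|roots (iter k (sl_step theta) id)|)%N.
  by rewrite cr; lia.
have [il' cr'] := step_props theta il c2.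
by split => //; rewrite cr' cr subnS.
Qed.


Lemma cluster_lt (R : realType) (M d K : nat) (theta : 'M[R]_(M, d)) m :
  (1 < K)%N -> (K <= M)%N -> (cluster_index K theta m < K)%N.
Proof.
move=> K1 KM; rewrite /cluster_index /sl_labels.
have [il cr] := iter_props theta K1 KM (leqnn (M - K)).
set lab := iter _ _ _ in il cr *.
rewrite subKn // in cr.
have sub : [set r : 'I_M | (lab r == r) && (r < lab m)%N] \subset roots lab :\ lab m.
  apply/fintype.subsetP => r; rewrite !inE => /andP [-> lt]; rewrite andbT.
  by apply: contraTneq lt => ->; rewrite ltnn.
apply: (leq_ltn_trans (subset_leq_card sub)).
have := cardsD1 (lab m) (roots lab); rewrite inE il eqxx cr add1n => ->.
by rewrite ltnS leqnn.
Qed.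


Lemma ce_sym (M K : nat) (c c' : 'I_M -> nat) : (forall m, (c m < K)%N) ->
  clust_equiv K c c' -> clust_equiv K c' c.
Proof.
move=> cK [s H]; exists s^-1%g => m; have [hm E] := H m; exists (cK m).
have -> : Ordinal (cK m) = s (Ordinal hm) by apply: val_inj.
by rewrite permK.
Qed.

Lemma ce_trans (M K : nat) (c c' c'' : 'I_M -> nat) :
  clust_equiv K c c' -> clust_equiv K c' c'' -> clust_equiv K c c''.
Proof.
move=> [s Hs] [t Ht]; exists (t * s)%g => m.
have [hm' E'] := Ht m; have [hm E] := Hs m; exists hm'.
rewrite permM E; congr val; congr (s _); exact: val_inj.
Qed.

Lemma eucl_small (R : realType) d (a b : 'rV[R]_d) (eta : R) : 0 < eta ->
  (forall i, `|a ord0 i - b ord0 i| < eta) -> eucl_dist a b < d.+1%:R * eta.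
Proof.
move=> e0 H; rewrite /eucl_dist.
have Hs : \sum_(i < d) (a ord0 i - b ord0 i) ^+ 2 <= d%:R * eta ^+ 2.
  rewrite mulr_natl -[X in _ *+ X]card_ord -sumr_const.
  apply: ler_sum => i _; have := H i; rewrite ltr_norml => /andP [h1 h2]; nra.
have d0 : 0 <= d%:R :> R by rewrite ler0n.
have -> : d.+1%:R * eta = Num.sqrt ((d.+1%:R * eta) ^+ 2).
  by rewrite sqrtr_sqr ger0_norm // mulr_ge0 // ltW.
rewrite ltr_sqrt; last by rewrite exprn_gt0 // mulr_gt0.
apply: (le_lt_trans Hs); rewrite -natr1; nra.
Qed.

Lemma kl_bounded (R : realType) d dT (T : measurableType dT) (Theta : set 'rV[R]_d)
  (mu : {measure set T -> \bar R}) (q : 'rV[R]_d -> T -> R) :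
  compact Theta ->
  (forall (e : R), 0 < e -> exists2 delta : R, 0 < delta &
     forall a b a' b', Theta a -> Theta b -> Theta a' -> Theta b' ->
       eucl_dist a a' < delta -> eucl_dist b b' < delta ->
       `|fine (KL mu (q a) (q b)) - fine (KL mu (q a') (q b'))| < e) ->
  exists B, forall a b, Theta a -> Theta b -> fine (KL mu (q a) (q b)) <= B.
Proof.
move=> cT UC.
pose k := fun z : 'rV[R]_d * 'rV[R]_d => fine (KL mu (q z.1) (q z.2)).
have cA : compact (Theta `*` Theta) by exact: compact_setX.
have kc : {within Theta `*` Theta, continuous k}.
  apply/subspace_continuousP => z Az.
  apply/cvgrPdist_lt => e e0.
  have [del del0 Hdel] := UC e e0.
  rewrite /within; apply/nbhs_ballP.
  exists (del / d.+1%:R); first by rewrite /= divr_gt0.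
  move=> t [[_ B1] [_ B2]] [At1 At2]; rewrite /from_subspace /k.
  have Hd : forall x y : 'rV[R]_d, (forall i j, ball (x i j) (del / d.+1%:R) (y i j)) ->
      eucl_dist x y < del.
    move=> x y Hxy.
    have -> : del = d.+1%:R * (del / d.+1%:R) by rewrite mulrC divfK.
    apply: eucl_small; first by rewrite divr_gt0.
    by move=> i; have := Hxy ord0 i; rewrite /ball /=.
  by apply: Hdel => //; [case: Az|case: Az|exact: Hd|exact: Hd].
have := compact_bounded (continuous_compact kc cA).
move=> [M0 [_ HM]].
exists (`|M0| + 1) => a b Ta Tb.
have H1 : M0 < `|M0| + 1 by apply: (le_lt_trans (ler_norm M0)); rewrite ltrDl.
have H2 : [set k x | x in Theta `*` Theta] (k (a, b)) by exists (a, b).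
have /= H := HM _ H1 _ H2.
exact: le_trans (ler_norm _) H.
Qed.

Lemma einf_props (R : realType) (X : Type) (A : set X) (F : X -> \bar R) (f : X -> R) lam0 :
  A lam0 -> (forall lam, A lam -> F lam = (f lam)%:E) -> (forall lam, A lam -> 0 <= f lam) ->
  exists g, [/\ ereal_inf (F @` A) = g%:E, 0 <= g, (forall lam, A lam -> g <= f lam)
             & (forall a, (forall lam, A lam -> a <= f lam) -> a <= g)].
Proof.
move=> A0 HF f0.
have lb : forall lam, A lam -> (ereal_inf (F @` A) <= (f lam)%:E)%E.
  by move=> lam Al; rewrite -HF //; apply: (@ereal_inf_lbound R (F @` A)); exists lam.
have ge : forall a, (forall lam, A lam -> a <= f lam) -> (a%:E <= ereal_inf (F @` A))%E.
  by move=> a Ha; apply/ereal_infP => _ [lam Al <-]; rewrite HF // lee_fin Ha.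
have I0 : (0 <= ereal_inf (F @` A))%E by apply: ge => lam /f0.
have fin : ereal_inf (F @` A) \is a fin_num.
  by rewrite ge0_fin_numE // (le_lt_trans (lb _ A0)) // ltey.
exists (fine (ereal_inf (F @` A))); split.
- by rewrite fineK.
- by rewrite fine_ge0.
- by move=> lam Al; rewrite -lee_fin fineK // lb.
- by move=> a Ha; rewrite -lee_fin fineK // ge.
Qed.

Lemma sum_est (R : realType) (M : nat) (w w0 k k0 : 'I_M -> R) (B eta c : R) :
  (forall m, 0 <= w0 m) -> \sum_m w0 m = 1 -> (forall m, 0 <= k m <= B) ->
  (forall m, `|w m - w0 m| <= eta) -> (forall m, `|k m - k0 m| <= c) ->
  `|\sum_m w m * k m - \sum_m w0 m * k0 m| <= M%:R * (eta * B) + c.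
Proof.
move=> w00 w01 kB Hw Hk.
rewrite -sumrB; apply: le_trans (ler_norm_sum _ _ _) _.
apply: (@le_trans _ _ (\sum_m (eta * B + w0 m * c))).
  apply: ler_sum => m _.
  have -> : w m * k m - w0 m * k0 m = (w m - w0 m) * k m + w0 m * (k m - k0 m) by ring.
  apply: le_trans (ler_normD _ _) _; apply: lerD.
    rewrite normrM; have /andP[k0' kB'] := kB m; rewrite (ger0_norm k0').
    by apply: ler_pM => //.
  by rewrite normrM ger0_norm // ler_wpM2l.
rewrite big_split /= sumr_const card_ord -mulr_suml w01 mul1r mulr_natl.
by [].
Qed.

Unset Implicit Arguments. Set Strict Implicit.

Theorem lemma1 (R : realType) (M K d : nat)
  (dT : measure_display) (T : measurableType dT)
  (Theta : set 'rV[R]_d)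
  (mu : 'I_M -> {measure set T -> \bar R})
  (p : 'I_M -> 'rV[R]_d -> T -> R) :
  (1 < K)%N -> (K < M)%N ->
  compact Theta ->
  (forall m rho, Theta rho ->
     [/\ measurable_fun setT (p m rho), (forall x, 0 <= p m rho x)
       & (\int[mu m]_x (p m rho x)%:E = 1)%E]) ->
  (forall m rho1 rho2, Theta rho1 -> Theta rho2 ->
     KL (mu m) (p m rho1) (p m rho2) \is a fin_num) ->
  (forall m (e : R), 0 < e -> exists2 delta : R, 0 < delta &
     forall a b a' b', Theta a -> Theta b -> Theta a' -> Theta b' ->
       eucl_dist a a' < delta -> eucl_dist b b' < delta ->
       `|fine (KL (mu m) (p m a) (p m b)) - fine (KL (mu m) (p m a') (p m b'))|
         < e) ->
  {within simplex M `*` paramsM M Theta,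
     continuous (fun z : 'rV[R]_M * 'M[R]_(M, d) =>
                   psi K Theta mu p z.1 z.2)}.
Proof.
move=> K1 KM cT Hp Hfin UC.
have KM' : (K <= M)%N by exact: ltnW.
pose S := paramsM M Theta.
pose E (a b : 'M[R]_(M, d)) := clust_equiv K (cluster_index K a) (cluster_index K b).
have Esym : forall a b, E a b -> E b a.
  by move=> a b; apply: ce_sym => m; exact: cluster_lt.
have Etr : forall a b c, E a b -> E b c -> E a c.
  by move=> a b c; apply: ce_trans.
pose kk m (th lam : 'M[R]_(M, d)) :=
  fine (KL (mu m) (p m (row m th)) (p m (row m lam))).
have kge0 : forall m th lam, S th -> S lam -> 0 <= kk m th lam.
  move=> m th lam Sth Slam; apply: fine_ge0.
  have [mf f0 If] := Hp m _ (Sth m); have [mg g0 Ig] := Hp m _ (Slam m).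
  exact: KL_ge0 mf mg f0 g0 If Ig (Hfin m _ _ (Sth m) (Slam m)).
have kdiag : forall m th, kk m th th = 0.
  by move=> m th; rewrite /kk /KL integral0_eq // => x _; exact: kl_diag.
have [B HB] : exists B, forall m th lam, S th -> S lam -> kk m th lam <= B.
  have /choice [Bf HBf] : forall m, exists B, forall a b, Theta a -> Theta b ->
      fine (KL (mu m) (p m a) (p m b)) <= B.
    by move=> m; apply: kl_bounded => //; exact: UC.
  exists (\big[Order.max/0]_m Bf m) => m th lam Sth Slam.
  apply: le_trans (HBf m _ _ (Sth m) (Slam m)) _; exact: le_bigmax.
pose f (w : 'rV[R]_M) th lam := \sum_m w ord0 m * kk m th lam.
have Fsum : forall (w : 'rV[R]_M) th lam, S th -> S lam ->
    (\sum_(m < M) (w ord0 m)%:E * KL (mu m) (p m (row m th)) (p m (row m lam)))%E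
    = (f w th lam)%:E.
  move=> w th lam Sth Slam; rewrite /f -sumEFin; apply: eq_bigr => m _.
  by rewrite /kk EFinM fineK // Hfin.
have fdiag : forall (w : 'rV[R]_M) th, f w th th = 0.
  by move=> w th; rewrite /f big1 // => m _; rewrite kdiag mulr0.
apply/subspace_continuousP => -[w0 th0] [/= Hw0 Sth0].
rewrite /from_subspace /=.
have [[lam0 [Slam0 nE0]]|noalt] := pselect (exists lam, Alt K Theta th0 lam); last first.
  have psiy : forall (w : 'rV[R]_M) th, S th -> psi K Theta mu p w th = +oo%E.
    move=> w th Sth; rewrite /psi.
    have -> : Alt K Theta th = set0.
      apply/seteqP; split => [lam [Slam nE]|]; last by [].
      exfalso; apply: nE.
      have El : E lam th0.
        by apply: contrapT => h; apply: noalt; exists lam; split.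
      have Et : E th th0.
        by apply: contrapT => h; apply: noalt; exists th; split.
      exact: (Etr _ _ _ El (Esym _ _ Et)).
    by rewrite image_set0 ereal_inf0.
  rewrite (psiy _ _ Sth0).
  have Hn : \forall z \near within (simplex M `*` paramsM M Theta) (nbhs (w0, th0)),
      cst +oo%E z = psi K Theta mu p z.1 z.2.
    apply: (@filterS _ _ _ (simplex M `*` paramsM M Theta)); last exact: withinT.
    by move=> -[w th] [_ Sth] /=; rewrite (psiy _ _ Sth).
  exact: cvg_trans (near_eq_cvg Hn) (cvg_cst _).
have altS : forall th, S th -> exists lam, Alt K Theta th lam.
  move=> th Sth; case: (pselect (E lam0 th)) => H.
    exists th0; split; first exact: Sth0.
    move=> E0; apply: nE0.
    exact: (Etr _ _ _ H (Esym _ _ E0)).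
  exists lam0; exact: (conj Slam0 H).
have gP : forall (w : 'rV[R]_M) th, simplex M w -> S th -> exists g,
   [/\ psi K Theta mu p w th = g%:E, 0 <= g,
       (forall lam, Alt K Theta th lam -> g <= f w th lam)
     & (forall a, (forall lam, Alt K Theta th lam -> a <= f w th lam) -> a <= g)].
  move=> w th [w0' _] Sth; have [lam Al] := altS th Sth.
  apply: (einf_props Al).
  - move=> l [Sl _]; exact: Fsum.
  - move=> l [Sl _]; apply: sumr_ge0 => m _; apply: mulr_ge0; first exact: w0'.
    exact: kge0.
have [g0 [psi0 g00 g0lb g0glb]] := gP w0 th0 Hw0 Sth0.
rewrite psi0.
set A := simplex M `*` paramsM M Theta.
have HA : \forall z \near within A (nbhs (w0, th0)), A z by exact: withinT.
apply/fine_cvgP; split.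
  apply: filterS HA => -[w th] [Hw Sth] /=.
  by have [g [-> _ _ _]] := gP w th Hw Sth.
apply/cvgrPdist_lt => e e0.
have M0 : (0 < M)%N by lia.
have B0 : 0 <= B.
  exact: le_trans (kge0 (Ordinal M0) th0 th0 Sth0 Sth0) (HB _ _ _ Sth0 Sth0).
pose eta := e / (4 * (M%:R * B + 1)).
have MB0 : 0 <= M%:R * B by rewrite mulr_ge0 // ler0n.
have eta0 : 0 < eta by rewrite divr_gt0 // mulr_gt0 // ltr_wpDl.
have etaE : eta * (4 * (M%:R * B + 1)) = e.
  by rewrite divfK // gt_eqF // mulr_gt0 // ltr_wpDl.
have Hw : \forall z \near within A (nbhs (w0, th0)),
    forall m, `|(z.1 : 'rV[R]_M) ord0 m - w0 ord0 m| <= eta.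
  rewrite /within; apply/nbhs_ballP; exists eta; first exact: eta0.
  move=> -[w th] [[_ Bw] _] _ m /=.
  by have := Bw ord0 m; rewrite /ball /= distrC => /ltW.
have Hd : forall (del : R) (x y : 'rV[R]_d), 0 < del ->
    (forall i, `|x ord0 i - y ord0 i| < del / d.+1%:R) -> eucl_dist x y < del.
  move=> del x y del0 Hxy.
  have -> : del = d.+1%:R * (del / d.+1%:R) by rewrite mulrC divfK.
  by apply: eucl_small; first by rewrite divr_gt0.
have Hk : \forall z \near within A (nbhs (w0, th0)),
    forall m lam, S lam -> `|kk m z.2 lam - kk m th0 lam| <= e / 4.
  apply: filter_forall => m.
  have [del del0 Hdel] := UC m (e / 4) (divr_gt0 e0 (ltr0n _ 4)).
  rewrite /within; apply/nbhs_ballP; exists (del / d.+1%:R); first by rewrite /= divr_gt0.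
  move=> -[w th] [_ [_ Bth]] [_ Sth] lam Slam /=; apply: ltW.
  apply: Hdel; [exact: Sth|exact: Slam|exact: Sth0|exact: Slam| |].
  - apply: Hd => // i; rewrite !mxE; have := Bth m i; rewrite /ball /= distrC.
    by [].
  - apply: Hd => // i; rewrite subrr normr0; by rewrite divr_gt0.
near=> z.
have Hwz : forall m, `|(z.1 : 'rV[R]_M) ord0 m - w0 ord0 m| <= eta.
  by near: z; exact: Hw.
have Hkz : forall m lam, S lam -> `|kk m z.2 lam - kk m th0 lam| <= e / 4.
  by near: z; exact: Hk.
have [Hw' Sth] : simplex M z.1 /\ S z.2.
  by near: z; exact: HA.
rewrite /=.
set w := z.1 in Hwz Hw' *; set th := z.2 in Hkz Sth *.
have [g [-> g_0 glb gglb]] := gP w th Hw' Sth.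
rewrite /=.
have [Hw00 Hw01] := Hw0.
have est : forall lam, S lam -> `|f w th lam - f w0 th0 lam| <= e / 2.
  move=> lam Slam; rewrite /f.
  have kb : forall m, 0 <= kk m th lam <= B by move=> m; rewrite kge0 // HB.
  have Hse := (sum_est (B := B) (eta := eta) (c := e / 4) (w := fun m => w ord0 m) (w0 := fun m => w0 ord0 m)
    (k := fun m => kk m th lam) (k0 := fun m => kk m th0 lam) Hw00 Hw01 kb Hwz (fun m => Hkz m lam Slam)).
  apply: le_trans Hse _.
  have : M%:R * (eta * B) <= e / 4.
    rewrite mulrCA; move: etaE; set X := M%:R * B => etaE'.
    nra.
  lra.
have estl : forall lam, S lam -> f w th lam <= f w0 th0 lam + e / 2.
  by move=> lam /est; rewrite ler_norml; lra.
have estr : forall lam, S lam -> f w0 th0 lam <= f w th lam + e / 2.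
  by move=> lam /est; rewrite ler_norml; lra.
case: (pselect (E th th0)) => Eth.
  have AA : forall lam, Alt K Theta th lam <-> Alt K Theta th0 lam.
    move=> lam; split => -[Sl nE]; split; try exact: Sl.
      by move=> H; apply: nE; exact: (Etr _ _ _ H (Esym _ _ Eth)).
    by move=> H; apply: nE; exact: (Etr _ _ _ H Eth).
  have h1 : g - e / 2 <= g0.
    apply: g0glb => lam Al; have [Sl _] := Al.
    have := glb lam (proj2 (AA lam) Al); have := estl lam Sl; lra.
  have h2 : g0 - e / 2 <= g.
    apply: gglb => lam Al; have [Sl _] := Al.
    have := g0lb lam (proj1 (AA lam) Al); have := estr lam Sl; lra.
  rewrite ltr_norml; apply/andP; split; lra.
have A1 : Alt K Theta th0 th.
  by split; [exact: Sth|exact: (fun h => Eth h)].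
have A2 : Alt K Theta th th0.
  by split; [exact: Sth0|exact: (fun h => Eth (Esym _ _ h))].
have h1 := g0lb th A1; have h2 := glb th0 A2.
have h3 := estr th Sth; have h4 := estl th0 Sth0.
rewrite fdiag in h3; rewrite fdiag in h4.
rewrite ltr_norml; apply/andP; split; lra.
Unshelve. all: by end_near.
Qed.
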